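(* Let $(M,g,\varphi,\eta,\zeta)$ be an almost contact metric manifold of dimension $2n+1$ with $U(n)\times1$ intrinsic torsion $\xi$. Then $$s^{\rm alt}_{\mathfrak u(n)^\perp}=\tfrac12(i_8-i_{10}+i_{12}+i_{14})+2(i_7-i_{17}),\qquad s_{\mathfrak u(n)^\perp}=\tfrac12(s-s^* )+\mathrm{Ric}(\zeta,\zeta).$$
   Context: $(M,g)$ is an oriented Riemannian manifold of dimension $2n+1$ with Levi-Civita connection $\nabla$, a unit vector field $\zeta$, its dual one-form $\eta=g(\cdot,\zeta)$, and an endomorphism $\varphi$ with $\varphi^2X=-X+\eta(X)\zeta$ and $g(\varphi X,\varphi Y)=g(X,Y)-\eta(X)\eta(Y)$. This is a $U(n)\times1$-structure; $\mathfrak{so}(TM)=\mathfrak u(n)\oplus\mathfrak u(n)^\perp$ (orthogonal for the Killing form), and the projection onto $\mathfrak u(n)^\perp$ is $A\mapsto\frac12\big(A+\varphi A\varphi+\eta(A\,\cdot)\zeta+\eta(\cdot)A\zeta\big)$. The intrinsic torsion is $\xi_XY=\nabla^{U(n)}_XY-\nabla_XY$ where $\nabla^{U(n)}$ is induced by the $\mathfrak u(n)$-component of the Levi-Civita connection form; explicitly $\xi_XY=\frac12(\nabla_X\varphi)\varphi Y+\frac12(\nabla_X\eta)(Y)\zeta-\eta(Y)\nabla_X\zeta$. Conventions: $R(X,Y)=[\nabla_X,\nabla_Y]-\nabla_{[X,Y]}$; $(e_1,\dots,e_{2n})$ a local orthonormal frame of $\ker\eta$, completed by $\zeta$ to a frame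 $(E_a)$ of $TM$; $s=\sum_{a,b}g(R(E_a,E_b)E_b,E_a)$; $s^*=\sum_{a,b}g(R(E_a,E_b)\varphi E_b,\varphi E_a)$; $\mathrm{Ric}(X,Y)=\sum_ag(R(X,E_a)E_a,Y)$; $s_{\mathfrak u(n)^\perp}=\sum_{a,b}g(R(E_a,E_b)_{\mathfrak u(n)^\perp}E_b,E_a)$; $s^{\rm alt}_{\mathfrak u(n)^\perp}=\sum_{a,b}g([\xi_{E_a},\xi_{E_b}]_{\mathfrak u(n)^\perp}E_b,E_a)$. With $\alpha(X,Y,Z)=g(\xi_XY,Z)$ and indices $i,j,k$ running over $1,\dots,2n$: $i_7=\sum_{j,k}\alpha(\zeta,e_j,e_k)\alpha(e_j,\zeta,e_k)$, $i_8=\sum_{i,j}\alpha(e_i,e_j,\zeta)\alpha(e_j,e_i,\zeta)$, $i_{10}=\sum_{i,j}\alpha(e_i,e_i,\zeta)\alpha(e_j,e_j,\zeta)$, $i_{12}=\sum_{i,j}\alpha(e_i,e_j,\zeta)\alpha(\varphi e_j,\varphi e_i,\zeta)$, $i_{14}=\sum_{i,j}\alpha(e_i,\varphi e_i,\zeta)\alpha(e_j,\varphi e_j,\zeta)$, $i_{17}=\sum_{i,k}\alpha(e_i,e_i,e_k)\alpha(\zeta,\zeta,e_k)$. *)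

(* Defs.v *)
(* Pointwise (linear-algebraic) model of an almost contact
   metric manifold of dimension 2n+1 at a point, expressed in a local
   orthonormal frame (E_a) = (e_1,...,e_2n, zeta). *)
From HB Require Import structures.
From mathcomp Require Import all_boot all_order all_algebra.
Set Implicit Arguments. Unset Strict Implicit. Unset Printing Implicit Defensive.
Import Order.TTheory GRing.Theory Num.Theory.
Local Open Scope ring_scope.

Section ACM.
Variable R : realFieldType.
Variable n : nat.
Notation m := (n.*2).+1.
Notation vec := 'cV[R]_m.
Notation endo := 'M[R]_m.

Definition E (a : 'I_m) : vec := \col_(j < m) (j == a)%:R.
(* the metric g (orthonormal frame => Euclidean dot product) *)
Definition g (X Y : vec) : R := (X^T *m Y) 0 0.
Definition zeta : vec := E ord_max.
Definition eta (X : vec) : R := g X zeta.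

Definition acm_structure (phi : endo) : Prop :=
  (forall X : vec, phi *m (phi *m X) = - X + eta X *: zeta) /\
  (forall X Y : vec, g (phi *m X) (phi *m Y) = g X Y - eta X * eta Y).

(* projection so(TM) -> u(n)^perp *)
Definition proj_perp (phi A : endo) : endo :=
  2^-1 *: (A + phi *m A *m phi + zeta *m (zeta^T *m A) + (A *m zeta) *m zeta^T).

(* Levi-Civita connection at the point: nabla_{E_a} E_b = Gamma a *m E_b, with
   Gamma a skew (metric); phi and zeta have constant components in the frame *)
Definition nabla_phi (Gamma : 'I_m -> endo) (phi : endo) (a : 'I_m) : endo :=
  Gamma a *m phi - phi *m Gamma a.
Definition nabla_zeta (Gamma : 'I_m -> endo) (a : 'I_m) : vec := Gamma a *m zeta.
Definition nabla_eta (Gamma : 'I_m -> endo) (a : 'I_m) (Y : vec) : R :=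
  g Y (nabla_zeta Gamma a).

(* intrinsic torsion xi_{E_a} Y =
   1/2 (nabla_a phi) phi Y + 1/2 (nabla_a eta)(Y) zeta - eta(Y) nabla_a zeta *)
Definition xi (Gamma : 'I_m -> endo) (phi : endo) (a : 'I_m) : endo :=
  2^-1 *: (nabla_phi Gamma phi a *m phi)
  + 2^-1 *: (zeta *m (nabla_zeta Gamma a)^T)
  - (nabla_zeta Gamma a) *m zeta^T.

Definition xiv (Gamma : 'I_m -> endo) (phi : endo) (X : vec) : endo :=
  \sum_(a < m) X a 0 *: xi Gamma phi a.

Definition alpha Gamma phi (X Y Z : vec) : R := g (xiv Gamma phi X *m Y) Z.

(* indices i of e_i : those a <> ord_max (i.e. a < 2n) *)
Definition i7 Gamma phi : R :=
  \sum_(j < m | j != ord_max) \sum_(k < m | k != ord_max)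
    alpha Gamma phi zeta (E j) (E k) * alpha Gamma phi (E j) zeta (E k).
Definition i8 Gamma phi : R :=
  \sum_(i < m | i != ord_max) \sum_(j < m | j != ord_max)
    alpha Gamma phi (E i) (E j) zeta * alpha Gamma phi (E j) (E i) zeta.
Definition i10 Gamma phi : R :=
  \sum_(i < m | i != ord_max) \sum_(j < m | j != ord_max)
    alpha Gamma phi (E i) (E i) zeta * alpha Gamma phi (E j) (E j) zeta.
Definition i12 Gamma phi : R :=
  \sum_(i < m | i != ord_max) \sum_(j < m | j != ord_max)
    alpha Gamma phi (E i) (E j) zeta
    * alpha Gamma phi (phi *m E j) (phi *m E i) zeta.
Definition i14 Gamma phi : R :=
  \sum_(i < m | i != ord_max) \sum_(j < m | j != ord_max)
    alpha Gamma phi (E i) (phi *m E i) zeta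
    * alpha Gamma phi (E j) (phi *m E j) zeta.
Definition i17 Gamma phi : R :=
  \sum_(i < m | i != ord_max) \sum_(k < m | k != ord_max)
    alpha Gamma phi (E i) (E i) (E k) * alpha Gamma phi zeta zeta (E k).

Definition s_alt_perp Gamma phi : R :=
  \sum_(a < m) \sum_(b < m)
    g (proj_perp phi (xi Gamma phi a *m xi Gamma phi b
                      - xi Gamma phi b *m xi Gamma phi a) *m E b) (E a).

(* curvature at the point: Rm a b is the endomorphism R(E_a, E_b) *)
Definition algebraic_curvature (Rm : 'I_m -> 'I_m -> endo) : Prop :=
  (forall a b, Rm b a = - Rm a b) /\
  (forall a b, (Rm a b)^T = - Rm a b) /\
  (forall a b c d, g (Rm a b *m E c) (E d) = g (Rm c d *m E a) (E b)) /\
  (forall a b c, Rm a b *m E c + Rm b c *m E a + Rm c a *m E b = 0).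

Definition scal (Rm : 'I_m -> 'I_m -> endo) : R :=
  \sum_(a < m) \sum_(b < m) g (Rm a b *m E b) (E a).
Definition scal_star (Rm : 'I_m -> 'I_m -> endo) (phi : endo) : R :=
  \sum_(a < m) \sum_(b < m) g (Rm a b *m (phi *m E b)) (phi *m E a).
Definition Ric (Rm : 'I_m -> 'I_m -> endo) (X Y : vec) : R :=
  \sum_(a < m) g (\sum_(c < m) X c 0 *: Rm c a *m E a) Y.
Definition s_perp (Rm : 'I_m -> 'I_m -> endo) (phi : endo) : R :=
  \sum_(a < m) \sum_(b < m) g (proj_perp phi (Rm a b) *m E b) (E a).

End ACM.

(* Main.v *)
Require Import Defs.
From HB Require Import structures.
From mathcomp Require Import all_boot all_order all_algebra.
From mathcomp Require Import ring lra.
Import Order.TTheory GRing.Theory Num.Theory.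
Local Open Scope ring_scope.
Set Implicit Arguments. Unset Strict Implicit. Unset Printing Implicit Defensive.

Section P.
Variable R : realFieldType.
Variable n : nat.
Local Notation m := (n.*2).+1.
Local Notation z := (zeta R n).
Local Notation mx := 'M[R]_m.
Local Notation zi := (@ord_max (n.*2)).
Local Notation EE := (@E R n).

Lemma EEE a j : EE a j 0 = (j == a)%:R.
Proof. by rewrite mxE. Qed.

Lemma sum_delta (F : 'I_m -> R) a : \sum_k F k * (k == a)%:R = F a.
Proof.
rewrite (bigD1 a) //= eqxx mulr1 big1 ?addr0 // => k /negbTE ->; by rewrite mulr0.
Qed.
Lemma sum_delta' (F : 'I_m -> R) a : \sum_k (k == a)%:R * F k = F a.
Proof.
rewrite (bigD1 a) //= eqxx mul1r big1 ?addr0 // => k /negbTE ->; by rewrite mul0r.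
Qed.

Lemma mulE (A : mx) i j : (A *m EE j) i 0 = A i j.
Proof. by rewrite mxE; under eq_bigr do rewrite EEE; rewrite sum_delta. Qed.

Lemma gC (X Y : 'cV[R]_m) : g X Y = g Y X.
Proof. by rewrite /g !mxE; apply: eq_bigr => k _; rewrite !mxE mulrC. Qed.

Lemma gE' (X : 'cV[R]_m) a : g X (EE a) = X a 0.
Proof. by rewrite /g mxE; under eq_bigr do rewrite EEE mxE; rewrite sum_delta. Qed.

Lemma gE (M : mx) a b : g (M *m EE b) (EE a) = M a b.
Proof. by rewrite gE' mulE. Qed.

Lemma mx_ext (A B : mx) : (forall X : 'cV[R]_m, A *m X = B *m X) -> A = B.
Proof.
move=> H; apply/matrixP=> i j; by rewrite -!mulE H.
Qed.

Lemma zE j : z j 0 = (j == zi)%:R.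
Proof. by rewrite /zeta EEE. Qed.

Lemma ztz : z^T *m z = 1%:M.
Proof.
apply/matrixP=> i j; rewrite !ord1 !mxE.
under eq_bigr do rewrite !mxE.
by rewrite sum_delta eqxx.
Qed.

Lemma etaZ (X : 'cV[R]_m) : Defs.eta X *: z = (z *m z^T) *m X.
Proof.
apply/matrixP=> i j; rewrite !ord1 !mxE /Defs.eta /g mxE mulr_suml.
apply: eq_bigr => k _; rewrite !mxE big_ord1 !mxE; ring.
Qed.


Local Notation Z := (z *m z^T).

Lemma gM (A : mx) (X Y : 'cV[R]_m) : g (A *m X) Y = g X (A^T *m Y).
Proof. by rewrite /g trmx_mul mulmxA. Qed.

Lemma zTZ : z^T *m Z = z^T.
Proof. by rewrite mulmxA ztz mul1mx. Qed.
Lemma ZZ : Z *m Z = Z.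
Proof. by rewrite -mulmxA zTZ. Qed.
Lemma ZT : Z^T = Z.
Proof. by rewrite trmx_mul trmxK. Qed.

Lemma vec0 (v : 'cV[R]_m) : v^T *m v = 0 -> v = 0.
Proof.
move=> /matrixP /(_ 0 0); rewrite !mxE => h; move: h; under eq_bigr do rewrite mxE; move=> h.
have h2 := psumr_eq0P (P := predT) (F := fun k => v k 0 * v k 0).
apply/matrixP=> i j; rewrite ord1 mxE.
have H0 : forall k, predT k -> 0 <= v k 0 * v k 0.
  by move=> k _; rewrite -expr2 sqr_ge0.
have H1 : \sum_(k | predT k) v k 0 * v k 0 = 0.
  exact: h.
have /eqP := h2 H0 H1 i isT.
by rewrite mulf_eq0 orbb => /eqP.
Qed.

Section Phi.
Variable P : mx.
Hypothesis hP : acm_structure P.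

Lemma PP : P *m P = Z - 1%:M.
Proof.
apply: mx_ext => X; rewrite -mulmxA (proj1 hP) mulmxBl mul1mx etaZ.
by rewrite addrC.
Qed.

Lemma PtP : P^T *m P = 1%:M - Z.
Proof.
apply/matrixP=> a b.
have := (proj2 hP) (EE a) (EE b).
rewrite gM gC mulmxA gE => ->.
by rewrite /Defs.eta gE' !EEE (gC (EE a)) (gC (EE b)) !gE' !mxE big_ord1 !mxE eq_sym.
Qed.

Lemma Pz : P *m z = 0.
Proof.
apply: vec0; rewrite trmx_mul -mulmxA (mulmxA P^T) PtP mulmxBl mul1mx mulmxBr.
by rewrite mulmxA zTZ subrr.
Qed.

Lemma PZ : P *m Z = 0.
Proof. by rewrite mulmxA Pz mul0mx. Qed.

Lemma ZP : Z *m P = 0.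
Proof.
have : P *m (P *m P) = (P *m P) *m P by rewrite mulmxA.
rewrite PP mulmxBr mulmxBl PZ mulmx1 mul1mx sub0r => /eqP.
by rewrite eq_sym subr_eq addNr => /eqP.
Qed.

Lemma zTP : z^T *m P = 0.
Proof. by rewrite -zTZ -mulmxA ZP mulmx0. Qed.

Lemma PT : P^T = - P.
Proof.
have : P^T *m (P *m P) = (P^T *m P) *m P by rewrite mulmxA.
rewrite PP PtP mulmxBr mulmxBl ZP mulmx1 mul1mx subr0.
have -> : P^T *m Z = 0 by rewrite mulmxA -[z in P^T *m z]trmxK -trmx_mul zTP trmx0 mul0mx.
by rewrite sub0r => h; rewrite -[in RHS]h opprK.
Qed.


End Phi.

Lemma skewZ (M : mx) : M^T = -M -> Z *m M *m Z = 0.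
Proof.
move=> hM.
have hc : z^T *m M *m z = 0.
  apply/matrixP=> i j; rewrite !ord1.
  have : (z^T *m M *m z)^T = - (z^T *m M *m z).
    by rewrite !trmx_mul trmxK hM mulNmx mulmxN mulmxA.
  move/matrixP/(_ 0 0); rewrite [in X in X = _ -> _]mxE [in X in _ = X -> _]mxE => h.
  rewrite [RHS]mxE; lra.
by rewrite !mulmxA -(mulmxA z) -(mulmxA z) hc mulmx0 mul0mx.
Qed.

Ltac nc := rewrite ?(mulmxDl, mulmxDr, mulmxBl, mulmxBr, mulmxN, mulNmx, mulmxA, mulmx1, mul1mx, mulmx0, mul0mx, opprK).

Lemma sztz k (x : 'M[R]_(k,1)) : x *m z^T *m z = x.
Proof. by rewrite -mulmxA ztz mulmx1. Qed.

Lemma eMZ (M : mx) a b : (M *m Z) a b = M a zi * (b == zi)%:R.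
Proof.
rewrite mulmxA mxE big_ord1 [z^T _ _]mxE zE.
by rewrite /zeta mulE.
Qed.

Lemma eZM (M : mx) a b : (Z *m M) a b = (a == zi)%:R * M zi b.
Proof.
rewrite -mulmxA mxE big_ord1 zE mxE.
under eq_bigr do rewrite mxE zE.
by rewrite sum_delta'.
Qed.

Lemma eAZB (A B : mx) a b : (A *m Z *m B) a b = A a zi * B zi b.
Proof.
rewrite -mulmxA mxE.
under eq_bigr do rewrite eZM mulrA mulrAC.
by rewrite sum_delta.
Qed.

Lemma eZMZ (M : mx) a b : (Z *m M *m Z) a b = (a == zi)%:R * (b == zi)%:R * M zi zi.
Proof. by rewrite eMZ eZM; ring. Qed.

Lemma ePAZBP (Q A B : mx) a b : (Q *m (A *m Z *m B) *m Q) a b = (Q *m A) a zi * (B *m Q) zi b.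
Proof.
have -> : Q *m (A *m Z *m B) *m Q = (Q *m A) *m Z *m (B *m Q) by rewrite !mulmxA.
by rewrite eAZB.
Qed.

Lemma emul (A B : mx) i j : (A *m B) i j = \sum_k A i k * B k j.
Proof. by rewrite mxE. Qed.

Lemma eB (A B : mx) i j : (A - B) i j = A i j - B i j.
Proof. by rewrite !mxE. Qed.

Lemma eL (X Y A B C D F : mx) a b :
  (X + Y + 2^-1 *: (A - B + (C - D) - F)) a b =
  X a b + Y a b + 2^-1 * (A a b - B a b + (C a b - D a b) - F a b).
Proof. by rewrite !mxE. Qed.

Lemma sum2_lin (f1 f2 f3 f4 f5 f6 f7 : 'I_m -> 'I_m -> R) :
  \sum_a \sum_b (f1 a b + f2 a b + 2^-1 * (f3 a b - f4 a b + (f5 a b - f6 a b) - f7 a b))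
  = \sum_a \sum_b f1 a b + \sum_a \sum_b f2 a b
    + 2^-1 * (\sum_a \sum_b f3 a b - \sum_a \sum_b f4 a b
              + (\sum_a \sum_b f5 a b - \sum_a \sum_b f6 a b) - \sum_a \sum_b f7 a b).
Proof.
rewrite -!sumrN -!big_split mulr_sumr -!big_split /=; apply: eq_bigr => a _.
rewrite -!sumrN -!big_split mulr_sumr -!big_split /=; apply: eq_bigr => b _.
done.
Qed.

Section Alg.
Variable P : mx.
Hypothesis hP : acm_structure P.
Lemma PP' : P *m P = z *m z^T - 1%:M.
Proof. by rewrite PP. Qed.
Lemma sPP k (x : 'M[R]_(k,m)) : x *m P *m P = x *m z *m z^T - x.
Proof. by rewrite -mulmxA PP // mulmxBr mulmx1 mulmxA. Qed.
Lemma sPz k (x : 'M[R]_(k,m)) : x *m P *m z = 0.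
Proof. by rewrite -mulmxA Pz // mulmx0. Qed.
Lemma szTP k (x : 'M[R]_(k,1)) : x *m z^T *m P = 0.
Proof. by rewrite -mulmxA zTP // mulmx0. Qed.

Ltac simp := rewrite ?(PP', sPP, Pz hP, sPz, zTP hP, szTP, ztz, sztz, mulmx0, mul0mx, mulmx1, mul1mx).

Definition Bf (G : mx) := G + P *m G *m P + Z *m G + G *m Z.

Lemma Bskew G : G^T = - G -> (Bf G)^T = - Bf G.
Proof.
move=> hG; rewrite /Bf !raddfD /= !trmx_mul !hG (PT hP) trmxK.
nc. apply/matrixP=> i j; rewrite !mxE. lra.
Qed.

Lemma BQ G : Bf G *m P + P *m Bf G = Z *m Bf G *m P + P *m Bf G *m Z.
Proof.
rewrite /Bf. nc. simp. nc. simp.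
apply/matrixP=> i j; rewrite !mxE. lra.
Qed.

Variable Gamma : 'I_m -> mx.
Hypothesis hGam : forall a, (Gamma a)^T = - Gamma a.

Lemma xiE a : xi Gamma P a = - (2^-1) *: Bf (Gamma a).
Proof.
rewrite /xi /nabla_phi /nabla_zeta /Bf trmx_mul hGam.
nc. simp. nc. apply/matrixP=> i j; rewrite !mxE. lra.
Qed.

Lemma Tskew a : (xi Gamma P a)^T = - xi Gamma P a.
Proof. by rewrite xiE linearZ /= Bskew // scalerN. Qed.

Lemma TQ a : xi Gamma P a *m P + P *m xi Gamma P a
  = Z *m xi Gamma P a *m P + P *m xi Gamma P a *m Z.
Proof.
rewrite xiE; do 3 rewrite -?scalemxAl -?scalemxAr.
by rewrite -!scalerDr BQ.
Qed.

Section Key.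
Variables Ta Tb : mx.
Hypothesis hTa : Ta^T = - Ta.
Hypothesis hTb : Tb^T = - Tb.
Hypothesis qTa : Ta *m P + P *m Ta = Z *m Ta *m P + P *m Ta *m Z.
Hypothesis qTb : Tb *m P + P *m Tb = Z *m Tb *m P + P *m Tb *m Z.

Lemma zTz (T : mx) : T^T = - T -> z^T *m T *m z = 0.
Proof.
move=> hT; apply/matrixP=> i j; rewrite !ord1.
have : (z^T *m T *m z)^T = - (z^T *m T *m z).
  by rewrite !trmx_mul trmxK hT mulNmx mulmxN mulmxA.
move/matrixP/(_ 0 0); rewrite [in X in X = _ -> _]mxE [in X in _ = X -> _]mxE => h.
rewrite [RHS]mxE; lra.
Qed.

Lemma szTz (T : mx) k (x : 'M[R]_(k,1)) : T^T = - T -> x *m z^T *m T *m z = 0.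
Proof. by move=> hT; rewrite -!mulmxA (mulmxA z^T) zTz // mulmx0. Qed.

Lemma PTTP : P *m Ta *m Tb *m P =
  Ta *m Z *m Tb - Ta *m Tb + Ta *m Tb *m Z + Z *m Ta *m Tb - Z *m Ta *m Tb *m Z
  + P *m Ta *m Z *m Tb *m P.
Proof.
have hPTa : P *m Ta = - (Ta *m P) + Z *m Ta *m P + P *m Ta *m Z.
  by rewrite -addrA -qTa addrA addNr add0r.
have hTbP : Tb *m P = - (P *m Tb) + Z *m Tb *m P + P *m Tb *m Z.
  by rewrite -addrA -qTb addrCA addNr addr0.
rewrite -(mulmxA (P *m Ta)) hTbP hPTa.
nc. simp. nc. rewrite ?(szTz _ hTa, szTz _ hTb, mulmx0, mul0mx).
apply/matrixP=> i j; rewrite !mxE. lra.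
Qed.

End Key.

Lemma projC (Ta Tb : mx) : Ta^T = - Ta -> Tb^T = - Tb ->
  Ta *m P + P *m Ta = Z *m Ta *m P + P *m Ta *m Z ->
  Tb *m P + P *m Tb = Z *m Tb *m P + P *m Tb *m Z ->
  proj_perp P (Ta *m Tb - Tb *m Ta) =
  (Ta *m Tb - Tb *m Ta) *m Z + Z *m (Ta *m Tb - Tb *m Ta)
  + 2^-1 *: (Ta *m Z *m Tb - Tb *m Z *m Ta
             + P *m (Ta *m Z *m Tb - Tb *m Z *m Ta) *m P
             - Z *m (Ta *m Tb - Tb *m Ta) *m Z).
Proof.
move=> hTa hTb qTa qTb.
rewrite /proj_perp. nc.
rewrite (PTTP hTa hTb qTa qTb) (PTTP hTb hTa qTb qTa).
nc. apply/matrixP=> i j; rewrite !mxE. lra.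
Qed.


Local Notation T := (xi Gamma P).

Lemma Tsk a i j : T a i j = - T a j i.
Proof. by have := Tskew a; move/matrixP/(_ j i); rewrite !mxE. Qed.

Lemma Tzz a : T a zi zi = 0.
Proof. have := Tsk a zi zi; lra. Qed.

Lemma MPz (M : mx) i : (M *m P) i zi = 0.
Proof. by rewrite -mulE -mulmxA (Pz hP) mulmx0 mxE. Qed.

Lemma PzE i : P i zi = 0.
Proof. by rewrite -mulE (Pz hP) mxE. Qed.

Lemma zPE j : P zi j = 0.
Proof.
have := zTP hP; move/matrixP/(_ 0 j); rewrite !mxE.
under eq_bigr do rewrite !mxE. by rewrite sum_delta'.
Qed.

Lemma PTE a i j : (P *m T a) i j = (T a *m P) j i.
Proof.
have : (P *m T a)^T = T a *m P by rewrite trmx_mul Tskew (PT hP) mulNmx mulmxN opprK.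
by move/matrixP/(_ j i); rewrite mxE.
Qed.

Lemma Psk i j : P i j = - P j i.
Proof. by have := PT hP; move/matrixP/(_ j i); rewrite !mxE. Qed.

Lemma sumD (F : 'I_m -> R) : \sum_(i | i != zi) F i = \sum_i F i - F zi.
Proof. by rewrite [X in _ = X - _](bigD1 zi) //= [F zi + _]addrC addrK. Qed.

Lemma xivE c : xiv Gamma P (EE c) = T c.
Proof.
rewrite /xiv (bigD1 c) //= big1 ?addr0.
  by rewrite EEE eqxx scale1r.
by move=> k /negbTE hk; rewrite EEE hk scale0r.
Qed.

Lemma xivP j : xiv Gamma P (P *m EE j) = \sum_c P c j *: T c.
Proof. by rewrite /xiv; apply: eq_bigr => c _; rewrite mulE. Qed.

Lemma aE c b a : alpha Gamma P (EE c) (EE b) (EE a) = T c a b.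
Proof. by rewrite /alpha xivE gE. Qed.


Lemma i8E : i8 Gamma P = \sum_i \sum_j T i zi j * T j zi i.
Proof.
rewrite /i8 /zeta.
under eq_bigr => i _ do under eq_bigr => j _ do rewrite !aE.
under eq_bigr => i _ do rewrite sumD Tzz mul0r subr0.
rewrite sumD [X in _ - X = _]big1 ?subr0 // => j _; by rewrite Tzz mulr0.
Qed.


Lemma i10E : i10 Gamma P = \sum_i \sum_j T i zi i * T j zi j.
Proof.
rewrite /i10 /zeta.
under eq_bigr => i _ do under eq_bigr => j _ do rewrite !aE.
under eq_bigr => i _ do rewrite sumD Tzz mulr0 subr0.
rewrite sumD [X in _ - X = _]big1 ?subr0 // => j _; by rewrite Tzz mul0r.
Qed.

Lemma aP c b a : alpha Gamma P (EE c) (P *m EE b) (EE a) = (T c *m P) a b.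
Proof. by rewrite /alpha xivE mulmxA gE. Qed.

Lemma i14E : i14 Gamma P = \sum_i \sum_j (T i *m P) zi i * (T j *m P) zi j.
Proof.
rewrite /i14 /zeta.
under eq_bigr => i _ do under eq_bigr => j _ do rewrite !aP.
under eq_bigr => i _ do rewrite sumD MPz mulr0 subr0.
rewrite sumD [X in _ - X = _]big1 ?subr0 // => j _; by rewrite MPz mul0r.
Qed.

Lemma aPP j i a : alpha Gamma P (P *m EE j) (P *m EE i) (EE a)
  = \sum_c P c j * (T c *m P) a i.
Proof.
rewrite /alpha xivP mulmxA gE mulmx_suml summxE.
by apply: eq_bigr => c _; rewrite -scalemxAl mxE.
Qed.

Lemma i12E : i12 Gamma P = - \sum_i \sum_c (T i *m P) zi c * (T c *m P) zi i.
Proof.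
rewrite /i12 /zeta.
under eq_bigr => i _ do under eq_bigr => j _ do rewrite aE aPP.
under eq_bigr => i _ do rewrite sumD Tzz mul0r subr0.
rewrite sumD [X in _ - X = _]big1 ?subr0; last first.
  move=> j _; rewrite big1 ?mulr0 // => c _; by rewrite MPz mulr0.
rewrite -sumrN; apply: eq_bigr => i _.
under eq_bigr do rewrite mulr_sumr.
rewrite exchange_big /= -sumrN; apply: eq_bigr => c _.
rewrite [(T i *m P) zi c]mxE mulr_suml -sumrN; apply: eq_bigr => j _.
rewrite (Psk j c); ring.
Qed.


Definition Qz := \sum_k T zi k zi * T zi k zi.

Lemma i7E : i7 Gamma P = \sum_j \sum_k T zi k j * T j k zi - Qz.
Proof.
rewrite /i7 /zeta.
under eq_bigr => i _ do under eq_bigr => j _ do rewrite !aE.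
under eq_bigr => i _ do rewrite sumD Tzz mulr0 subr0.
by rewrite sumD.
Qed.

Lemma i17E : i17 Gamma P = \sum_i \sum_k T i k i * T zi k zi - Qz.
Proof.
rewrite /i17 /zeta.
under eq_bigr => i _ do under eq_bigr => j _ do rewrite !aE.
under eq_bigr => i _ do rewrite sumD Tzz mulr0 subr0.
by rewrite sumD.
Qed.


Lemma saltE : s_alt_perp Gamma P =
  \sum_a (T a *m T zi - T zi *m T a) a zi
  + \sum_b (T zi *m T b - T b *m T zi) zi b
  + 2^-1 * (\sum_a \sum_b T a a zi * T b zi b - \sum_a \sum_b T b a zi * T a zi b
     + (\sum_a \sum_b (P *m T a) a zi * (T b *m P) zi b
        - \sum_a \sum_b (P *m T b) a zi * (T a *m P) zi b)
     - 0).
Proof.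
rewrite /s_alt_perp.
under eq_bigr => a _ do under eq_bigr => b _ do
  rewrite gE (projC (Tskew a) (Tskew b) (TQ a) (TQ b))
    [P *m (_ - _)]mulmxBr [(P *m _ - _) *m P]mulmxBl eL eZMZ !eAZB !ePAZBP eMZ eZM.
rewrite sum2_lin.
congr (_ + _ + 2^-1 * (_ - _ + (_ - _) - _)).
- by under eq_bigr do rewrite sum_delta.
- by under eq_bigr do rewrite -mulr_sumr; rewrite sum_delta'.
- apply: big1 => a _; apply: big1 => b _.
  case: (eqVneq a zi) => [->|ha]; last by rewrite mul0r mul0r.
  case: (eqVneq b zi) => [->|hb]; last by rewrite mulr0 mul0r.
  by rewrite subrr mxE mulr0.
Qed.


Lemma TTE a b i j : (T a *m T b) i j = (T b *m T a) j i.
Proof.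
have : (T a *m T b)^T = T b *m T a by rewrite trmx_mul !Tskew mulNmx mulmxN opprK.
by move/matrixP/(_ j i); rewrite [in X in X = _ -> _]mxE => ->.
Qed.


Lemma G1 : \sum_a (T a *m T zi - T zi *m T a) a zi = \sum_b (T zi *m T b - T b *m T zi) zi b.
Proof. by apply: eq_bigr => a _; rewrite (eB (T a *m T zi)) (eB (T zi *m T a)) (TTE a zi a zi) (TTE zi a a zi). Qed.


Lemma G2 : \sum_b (T zi *m T b - T b *m T zi) zi b =
  \sum_j \sum_k T zi k j * T j k zi - \sum_i \sum_k T i k i * T zi k zi.
Proof.
under eq_bigr => b _ do rewrite (eB (T zi *m T b)) (emul (T zi) (T b)) (emul (T b) (T zi)).
rewrite sumrB.
have hA : \sum_b \sum_k T zi zi k * T b k b = - \sum_i \sum_k T i k i * T zi k zi.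
  rewrite -sumrN; apply: eq_bigr => b _; rewrite -sumrN; apply: eq_bigr => k _.
  rewrite (Tsk zi zi k); ring.
have hB : \sum_b \sum_k T b zi k * T zi k b = - \sum_j \sum_k T zi k j * T j k zi.
  rewrite -sumrN; apply: eq_bigr => b _; rewrite -sumrN; apply: eq_bigr => k _.
  rewrite (Tsk b k zi); ring.
rewrite hA hB; ring.
Qed.


Lemma G3a : \sum_a \sum_b T a a zi * T b zi b = - \sum_i \sum_j T i zi i * T j zi j.
Proof.
rewrite -sumrN; apply: eq_bigr => a _; rewrite -sumrN; apply: eq_bigr => b _.
rewrite (Tsk a a zi); ring.
Qed.

Lemma G3b : \sum_a \sum_b T b a zi * T a zi b = - \sum_i \sum_j T i zi j * T j zi i.
Proof.
rewrite -sumrN; apply: eq_bigr => a _; rewrite -sumrN; apply: eq_bigr => b _.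
rewrite (Tsk b a zi); ring.
Qed.

Lemma G4a : \sum_a \sum_b (P *m T a) a zi * (T b *m P) zi b
  = \sum_i \sum_j (T i *m P) zi i * (T j *m P) zi j.
Proof. by apply: eq_bigr => a _; apply: eq_bigr => b _; rewrite (PTE a a zi). Qed.

Lemma G4b : \sum_a \sum_b (P *m T b) a zi * (T a *m P) zi b
  = \sum_i \sum_c (T i *m P) zi c * (T c *m P) zi i.
Proof.
rewrite exchange_big /=; apply: eq_bigr => b _; apply: eq_bigr => a _.
by rewrite (PTE b a zi).
Qed.

Lemma part1 : s_alt_perp Gamma P
  = 2^-1 * (i8 Gamma P - i10 Gamma P + i12 Gamma P + i14 Gamma P)
    + 2 * (i7 Gamma P - i17 Gamma P).
Proof.
rewrite saltE G1 G2 G3a G3b G4a G4b i8E i10E i12E i14E i7E i17E.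
ring.
Qed.

End Alg.

Lemma eN (A : mx) i j : (- A) i j = - A i j.
Proof. by rewrite !mxE. Qed.

Lemma eL4 (A B C D : mx) a b :
  (2^-1 *: (A + B + C + D)) a b = 2^-1 * (A a b + B a b + C a b + D a b).
Proof. by rewrite !mxE. Qed.

Lemma projE (Q A : mx) a b : (proj_perp Q A) a b =
  2^-1 * (A a b + (Q *m A *m Q) a b + (a == zi)%:R * A zi b + A a zi * (b == zi)%:R).
Proof. by rewrite /proj_perp mulmxA -(mulmxA A) eL4 eZM eMZ. Qed.

Lemma sum4_lin (f1 f2 f3 f4 : 'I_m -> 'I_m -> R) :
  \sum_a \sum_b 2^-1 * (f1 a b + f2 a b + f3 a b + f4 a b)
  = 2^-1 * (\sum_a \sum_b f1 a b + \sum_a \sum_b f2 a b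
              + \sum_a \sum_b f3 a b + \sum_a \sum_b f4 a b).
Proof.
rewrite -!big_split mulr_sumr /=; apply: eq_bigr => a _.
by rewrite -!big_split mulr_sumr /=.
Qed.

Section Curv.
Variable P : mx.
Hypothesis hP : acm_structure P.
Variable Rm : 'I_m -> 'I_m -> mx.
Hypothesis hR : algebraic_curvature Rm.

Lemma gPP (M : mx) a b : g (M *m (P *m EE b)) (P *m EE a) = - (P *m M *m P) a b.
Proof.
rewrite gC gM (PT hP) gC !mulmxA gE.
by rewrite !mulNmx eN.
Qed.

Lemma RicE : Ric Rm z z = \sum_a (Rm zi a) zi a.
Proof.
rewrite /Ric; apply: eq_bigr => a _.
rewrite (bigD1 zi) //= big1 ?addr0.
  by rewrite zE eqxx scale1r /zeta gE.
by move=> c /negbTE hc; rewrite zE hc scale0r mul0mx.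
Qed.

Lemma part2 : s_perp Rm P = 2^-1 * (scal Rm - scal_star Rm P) + Ric Rm z z.
Proof.
rewrite /s_perp /scal /scal_star RicE.
under eq_bigr => a _ do under eq_bigr => b _ do rewrite gE projE.
under [in RHS]eq_bigr => a _ do under eq_bigr => b _ do rewrite gE.
under [X in _ - X]eq_bigr => a _ do under eq_bigr => b _ do rewrite gPP.
rewrite sum4_lin.
have h3 : \sum_a \sum_b (a == zi)%:R * (Rm a b) zi b = \sum_b (Rm zi b) zi b.
  by under eq_bigr do rewrite -mulr_sumr; rewrite sum_delta'.
have h4 : \sum_a \sum_b (Rm a b) a zi * (b == zi)%:R = \sum_a (Rm zi a) zi a.
  under eq_bigr do rewrite sum_delta.
  apply: eq_bigr => a _.
  have [h1 [h2 _]] := hR.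
  rewrite (h1 zi a) eN.
  have := h2 zi a; move/matrixP/(_ zi a); rewrite !mxE => ->.
  by rewrite opprK.
have h2' : \sum_a \sum_b - (P *m Rm a b *m P) a b = - \sum_a \sum_b (P *m Rm a b *m P) a b.
  by rewrite -sumrN; apply: eq_bigr => a _; rewrite sumrN.
rewrite h3 h4 h2'; lra.
Qed.

End Curv.
End P.

Theorem mainTheorem11 (R : realFieldType) (n : nat)
  (phi : 'M[R]_((n.*2).+1))
  (Gamma : 'I_((n.*2).+1) -> 'M[R]_((n.*2).+1))
  (Rm : 'I_((n.*2).+1) -> 'I_((n.*2).+1) -> 'M[R]_((n.*2).+1)) :
  acm_structure phi ->
  (forall a, (Gamma a)^T = - Gamma a) ->
  algebraic_curvature Rm ->
  s_alt_perp Gamma phi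
    = 2^-1 * (i8 Gamma phi - i10 Gamma phi + i12 Gamma phi + i14 Gamma phi)
      + 2 * (i7 Gamma phi - i17 Gamma phi)
  /\ s_perp Rm phi
    = 2^-1 * (scal Rm - scal_star Rm phi) + Ric Rm (@zeta R n) (@zeta R n).
Proof.
move=> hP hG hR; split.
- exact: (part1 hP hG).
- exact: (part2 hP hR).
Qed.
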